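(* Let $(G,\mathcal{B}_1,\mathcal{B}_2)$ be a Rota-Baxter system of groups, with descendent operation $\circ$ and cocycle $\Phi$. Then $(G,\circ)$ is a group if and only if $\Phi:G\to G$ is bijective.
   Context: A Rota-Baxter system of groups is a triple $(G,\mathcal{B}_1,\mathcal{B}_2)$ where $G$ is a group and $\mathcal{B}_1,\mathcal{B}_2:G\to G$ are maps (not necessarily homomorphisms) such that for all $a,b\in G$: $\mathcal{B}_1(a)\mathcal{B}_1(b)=\mathcal{B}_1(\mathcal{B}_1(a)b\mathcal{B}_2(a))$ and $\mathcal{B}_2(b)\mathcal{B}_2(a)=\mathcal{B}_2(\mathcal{B}_1(a)b\mathcal{B}_2(a))$. The descendent operation is $a\circ b=\mathcal{B}_1(a)\,b\,\mathcal{B}_2(a)$, and the cocycle is $\Phi(a)=\mathcal{B}_1(a)\mathcal{B}_2(a)$. *)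

(* Defs.v *)
From mathcomp Require Import ssreflect ssrfun ssrbool.

Definition group_axioms {G : Type} (mul : G -> G -> G) (one : G) (inv : G -> G) : Prop :=
  (forall a b c, mul a (mul b c) = mul (mul a b) c) /\
  (forall a, mul one a = a /\ mul a one = a) /\
  (forall a, mul (inv a) a = one /\ mul a (inv a) = one).

Definition is_group_op {G : Type} (op : G -> G -> G) : Prop :=
  (forall a b c, op a (op b c) = op (op a b) c) /\
  exists e : G,
    (forall a, op e a = a /\ op a e = a) /\
    (forall a, exists a', op a' a = e /\ op a a' = e).

Definition RB_system {G : Type} (mul : G -> G -> G) (B1 B2 : G -> G) : Prop :=
  forall a b : G,
    mul (B1 a) (B1 b) = B1 (mul (mul (B1 a) b) (B2 a)) /\
    mul (B2 b) (B2 a) = B2 (mul (mul (B1 a) b) (B2 a)).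

Definition descendent {G : Type} (mul : G -> G -> G) (B1 B2 : G -> G) (a b : G) : G :=
  mul (mul (B1 a) b) (B2 a).

Definition cocycle {G : Type} (mul : G -> G -> G) (B1 B2 : G -> G) (a : G) : G :=
  mul (B1 a) (B2 a).

(* Main.v *)
Require Import Defs.
From mathcomp Require Import ssreflect ssrfun ssrbool.

Section Aux.
Context {G : Type} {mul : G -> G -> G} {one : G} {inv : G -> G}.
Variable (HG : group_axioms mul one inv).

Lemma gA a b c : mul a (mul b c) = mul (mul a b) c.
Proof. by case: HG. Qed.
Lemma g1l a : mul one a = a.
Proof. by case: HG => _ [H _]; case: (H a). Qed.
Lemma g1r a : mul a one = a.
Proof. by case: HG => _ [H _]; case: (H a). Qed.
Lemma gVl a : mul (inv a) a = one.
Proof. by case: HG => _ [_ H]; case: (H a). Qed.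
Lemma gVr a : mul a (inv a) = one.
Proof. by case: HG => _ [_ H]; case: (H a). Qed.
Lemma gcl (x y z : G) : mul x y = mul x z -> y = z.
Proof.
move=> H. by rewrite -(g1l y) -(g1l z) -(gVl x) -!gA H.
Qed.
Lemma gcr (x y z : G) : mul y x = mul z x -> y = z.
Proof.
move=> H. by rewrite -(g1r y) -(g1r z) -(gVr x) !gA H.
Qed.
End Aux.

Theorem theorem3p12 (G : Type) (mul : G -> G -> G) (one : G) (inv : G -> G)
  (HG : group_axioms mul one inv) (B1 B2 : G -> G)
  (HRB : RB_system mul B1 B2) :
  is_group_op (descendent mul B1 B2) <-> bijective (cocycle mul B1 B2).
Proof.
set o := descendent mul B1 B2.
have oA : forall a b c, o a (o b c) = o (o a b) c.
  move=> a b c; rewrite /o /descendent.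
  case: (HRB a b) => <- <-.
  by rewrite !(gA HG).
have Phi1 : forall a, cocycle mul B1 B2 a = o a one.
  by move=> a; rewrite /o /descendent /cocycle (g1r HG).
have PhiM : forall a b, cocycle mul B1 B2 (o a b) = o a (cocycle mul B1 B2 b).
  by move=> a b; rewrite !Phi1 oA.
have Linj : forall a b c, o a b = o a c -> b = c.
  move=> a b c; rewrite /o /descendent => H.
  exact: (gcl HG _ _ _ (gcr HG _ _ _ H)).
have Lsurj : forall a c, o a (mul (mul (inv (B1 a)) c) (inv (B2 a))) = c.
  move=> a c; rewrite /o /descendent !(gA HG) (gVr HG) (g1l HG).
  by rewrite -(gA HG) (gVl HG) (g1r HG).
split.
- case=> _ [e [He Hinv]].
  case: (Hinv one) => i [Hi1 Hi2].
  exists (fun x => o x i) => x; rewrite Phi1.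
  + by rewrite -oA Hi2; case: (He x).
  + by rewrite -oA Hi1; case: (He x).
- case=> g Hg1 Hg2.
  have Phiinj : forall x y, cocycle mul B1 B2 x = cocycle mul B1 B2 y -> x = y.
    by move=> x y H; rewrite -(Hg1 x) -(Hg1 y) H.
  set a0 := one.
  set e := mul (mul (inv (B1 a0)) a0) (inv (B2 a0)).
  have Hae : o a0 e = a0 by apply: Lsurj.
  have Hel : forall x, o e x = x.
    by move=> x; apply: (Linj a0); rewrite oA Hae.
  have He1 : cocycle mul B1 B2 e = one by rewrite Phi1 Hel.
  have Her : forall x, o x e = x.
    by move=> x; apply: Phiinj; rewrite PhiM He1 -Phi1.
  split; first exact: oA.
  exists e; split; first by move=> x; split.
  move=> x.
  set x' := mul (mul (inv (B1 x)) e) (inv (B2 x)).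
  have Hx : o x x' = e by apply: Lsurj.
  set x'' := mul (mul (inv (B1 x')) e) (inv (B2 x')).
  have Hx' : o x' x'' = e by apply: Lsurj.
  exists x'; split => //.
  by rewrite -(Her (o x' x)) -Hx' oA -(oA x' x x') Hx Her.
Qed.
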